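(* Let $n\ge 1$ and $A\subseteq[n]$. Define the reverse complement $A^*=\{n+1-i : i\in[n]\setminus A\}$. Let $C_1=D_X(A)$ and $C_2=D_X(A^* )$. Then $C_2$ is exactly the set of orders obtained from the orders of $C_1$ by first reversing each order (replacing it by its dual) and then renaming each alternative $i$ as $n+1-i$.
   Context: Alternatives are $X=[n]=\{1,\dots,n\}$, with societal axis $1<2<\dots<n$. Linear orders are written as strings, leftmost alternative ranked highest. The dual (reverse) of a linear order $q$ is the order ranking $x$ above $y$ iff $q$ ranks $y$ above $x$. For $A\subseteq[n]$, the set-alternating domain $D_X(A)$ is the set of all linear orders $q$ on $[n]$ such that for every triple $i<j<k$ in $[n]$: if $j\in A$ then $i$ is not ranked last among $\{i,j,k\}$ in $q$ (never condition $1N3$), and if $j\notin A$ then $k$ is not ranked first among $\{i,j,k\}$ in $q$ (never condition $3N1$). *)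

(* Defs.v *)
From mathcomp Require Import all_boot all_fingroup.
Set Implicit Arguments. Unset Strict Implicit. Unset Printing Implicit Defensive.

(* Alternatives [n] = {1,...,n} are encoded by 'I_n: the ordinal k stands for
   alternative k+1, so the axis order 1<2<...<n is the order on 'I_n, and
   the map i |-> n+1-i is rev_ord.
   A linear order q on [n] is encoded by its rank permutation
   rank : {perm 'I_n}, rank x = position of x (0 = ranked highest);
   q ranks x above y iff rank x < rank y. *)

Definition above n (q : {perm 'I_n}) (x y : 'I_n) : bool := q x < q y.

Definition in_DX n (A : {set 'I_n}) (q : {perm 'I_n}) : Prop :=
  forall i j k : 'I_n, i < j -> j < k ->
    (j \in A -> ~ (above q j i /\ above q k i))   (* i not ranked last *)
  /\ (j \notin A -> ~ (above q k i /\ above q k j)). (* k not ranked first *)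

Definition dual_order n (q : {perm 'I_n}) : {perm 'I_n} :=
  (q * perm (@rev_ord_inj n))%g.

Definition rename_rev n (q : {perm 'I_n}) : {perm 'I_n} :=
  (perm (@rev_ord_inj n) * q)%g.

Definition rev_compl n (A : {set 'I_n}) : {set 'I_n} :=
  [set rev_ord i | i in ~: A].

(* Main.v *)
Require Import Defs.
From mathcomp Require Import all_boot all_fingroup.
From mathcomp Require Import zify.

Definition T {n} (q : {perm 'I_n}) := rename_rev (dual_order q).

Lemma T_app {n} (q : {perm 'I_n}) x : T q x = rev_ord (q (rev_ord x)).
Proof. by rewrite /T /rename_rev /dual_order !permM !permE. Qed.

Lemma TT {n} (q : {perm 'I_n}) : T (T q) = q.
Proof. by apply/permP => x; rewrite !T_app !rev_ordK. Qed.

Lemma above_T {n} (q : {perm 'I_n}) x y :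
  above (T q) x y = above q (rev_ord y) (rev_ord x).
Proof.
rewrite /above !T_app /=.
have := ltn_ord (q (rev_ord x)); have := ltn_ord (q (rev_ord y)); lia.
Qed.

Lemma mem_rc {n} (A : {set 'I_n}) j : (rev_ord j \in rev_compl A) = (j \notin A).
Proof. by rewrite /rev_compl mem_imset ?inE //; apply: rev_ord_inj. Qed.

Lemma mem_rc' {n} (A : {set 'I_n}) j : (j \in rev_compl A) = (rev_ord j \notin A).
Proof. by rewrite -{1}(rev_ordK j) mem_rc. Qed.

Lemma rcK {n} (A : {set 'I_n}) : rev_compl (rev_compl A) = A.
Proof.
apply/setP => j.
have E : forall B : {set 'I_n}, (j \in rev_compl B) = (rev_ord j \notin B).
  by move=> B; rewrite -{1}(rev_ordK j) mem_rc.
by rewrite E mem_rc negbK.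
Qed.

Lemma fwd {n} (A : {set 'I_n}) q : in_DX A q -> in_DX (rev_compl A) (T q).
Proof.
move=> H i j k ij jk.
have ij' : rev_ord k < rev_ord j by rewrite /=; have := ltn_ord k; lia.
have jk' : rev_ord j < rev_ord i by rewrite /=; have := ltn_ord j; lia.
have [H1 H2] := H _ _ _ ij' jk'.
rewrite !above_T mem_rc' negbK.
split.
- move=> /H2 HH [a b]; by apply: HH; split.
- move=> /H1 HH [a b]; by apply: HH; split.
Qed.

Theorem lemma1 (n : nat) (A : {set 'I_n}) : 0 < n ->
  forall q2 : {perm 'I_n},
    in_DX (rev_compl A) q2 <->
    exists2 q1 : {perm 'I_n}, in_DX A q1 & q2 = rename_rev (dual_order q1).
Proof.
move=> _ q2; split.
- move=> H; exists (T q2); last by rewrite -/(T (T q2)) TT.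
  by rewrite -(rcK A); apply: fwd.
- by case=> q1 H ->; have := fwd _ _ H; rewrite /T.
Qed.
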